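(* If $m\ge 2$ and $k\ge 3$, the Spencer operator $\mathcal S^1\colon\operatorname{Hom}(V,\mathfrak a)\to\operatorname{Hom}(\wedge^2V,V)$ is injective.
   Context: $\mathfrak a=\mathfrak{sl}(2,\mathbb R)\times\mathfrak{gl}(m,\mathbb R)$ acting faithfully on $V=V_k\otimes W$, where $V_k=S^k(\mathbb R^2)$ is the irreducible $(k+1)$-dimensional $\mathfrak{sl}(2,\mathbb R)$-module and $W=\mathbb R^m$ the standard $\mathfrak{gl}(m,\mathbb R)$-module. $\mathcal S^1(\phi)(v_1\wedge v_2)=-\phi(v_2)v_1+\phi(v_1)v_2$. *)

(* Defs.v *)
From HB Require Import structures.
From mathcomp Require Import all_boot all_order all_algebra.
Set Implicit Arguments. Unset Strict Implicit. Unset Printing Implicit Defensive.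
Import Order.TTheory GRing.Theory Num.Theory.
Local Open Scope ring_scope.

(* V_k = S^k(R^2), with basis u_i = e1^(k-i) e2^i, i = 0..k (indices 'I_k.+1).
   A 2x2 matrix X acts on R^2 = span(e1,e2) by X e_c = sum_r X r c e_r, and is
   extended to S^k(R^2) as a derivation:
     X u_i = (k-i) (X00 u_i + X10 u_(i+1)) + i (X01 u_(i-1) + X11 u_i).
   rhoS k X is the matrix of this endomorphism: (rhoS k X) j i is the
   coefficient of u_j in X u_i. Restricted to sl(2) this is the irreducible
   (k+1)-dimensional representation. *)
Definition rhoS {R : nzRingType} (k : nat) (X : 'M[R]_2) : 'M[R]_(k.+1) :=
  \matrix_(j < k.+1, i < k.+1)
    ((if j == i then (k - i)%:R * X 0 0 + i%:R * X 1 1 else 0)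
     + (if (j : nat) == i.+1 then (k - i)%:R * X 1 0 else 0)
     + (if (j : nat).+1 == i then i%:R * X 0 1 else 0)).

(* V = V_k (x) W with W = R^m, represented as 'M_(k.+1, m):
   the matrix v stands for sum_(i,j) v i j u_i (x) eps_j. *)
Notation Vsp R k m := 'M[R]_(k.+1, m).

Definition in_sl2 {R : nzRingType} (X : 'M[R]_2) : Prop := \tr X = 0.

(* The (faithful) action of a = sl(2) x gl(m) on V = V_k (x) W:
   (X, Y) . (a (x) w) = (X a) (x) w + a (x) (Y w). *)
Definition act {R : nzRingType} (k m : nat) (XY : 'M[R]_2 * 'M[R]_m)
  (v : Vsp R k m) : Vsp R k m :=
  rhoS k XY.1 *m v + v *m (XY.2)^T.

Definition hom_V_a {R : nzRingType} (k m : nat)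
  (phi : Vsp R k m -> 'M[R]_2 * 'M[R]_m) : Prop :=
  [/\ forall (c : R) (u v : Vsp R k m),
        (phi (c *: u + v)).1 = c *: (phi u).1 + (phi v).1,
      forall (c : R) (u v : Vsp R k m),
        (phi (c *: u + v)).2 = c *: (phi u).2 + (phi v).2
    & forall v, in_sl2 (phi v).1].

Definition spencer1 {R : nzRingType} (k m : nat)
  (phi : Vsp R k m -> 'M[R]_2 * 'M[R]_m) (v1 v2 : Vsp R k m) : Vsp R k m :=
  - act (phi v2) v1 + act (phi v1) v2.

(* Main.v *)
Require Import Defs.
From mathcomp Require Import all_boot all_order all_algebra.
From mathcomp Require Import zify ring lra.
Import GRing.Theory Num.Theory.
Local Open Scope ring_scope.

Lemma act_delta (R : realFieldType) k m (XY : 'M[R]_2 * 'M[R]_m) (i r : 'I_k.+1) (j s : 'I_m) :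
  (act XY (delta_mx i j)) r s = rhoS k XY.1 r i * (s == j)%:R + (r == i)%:R * XY.2 s j.
Proof.
rewrite /act; move: (rhoS k XY.1) => A.
rewrite !mxE; congr (_ + _).
  rewrite (bigD1 i) //= big1 ?addr0; first by rewrite mxE eqxx.
  by move=> l /negbTE hl; rewrite mxE hl mulr0.
rewrite (bigD1 j) //= big1 ?addr0; first by rewrite !mxE eqxx andbT.
by move=> l /negbTE hl; rewrite mxE hl andbF mul0r.
Qed.

Lemma oppadd_entry (R : realFieldType) n m (M N : 'M[R]_(n, m)) r s :
  (- M + N) r s = - M r s + N r s.
Proof. by rewrite !mxE. Qed.

Lemma lin_sum (R : realFieldType) k m n (f : 'M[R]_(k.+1, m) -> 'M[R]_n)
  (hf : forall c u v, f (c *: u + v) = c *: f u + f v) v :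
  f v = \sum_i \sum_j v i j *: f (delta_mx i j).
Proof.
have f0 : f 0 = 0.
  have h := hf 1 0 0; rewrite !scale1r addr0 in h.
  by apply: (addrI (f 0)); rewrite addr0 -h.
have fadd : {morph f : x y / x + y}.
  by move=> x y; have := hf 1 x y; rewrite !scale1r.
have fsc : forall c u, f (c *: u) = c *: f u.
  by move=> c u; have := hf c u 0; rewrite !addr0 f0 addr0.
rewrite {1}(matrix_sum_delta v) (big_morph f fadd f0); apply: eq_bigr => i _.
rewrite (big_morph f fadd f0); apply: eq_bigr => j _; exact: fsc.
Qed.

Lemma tr2 (R : realFieldType) (A : 'M[R]_2) : \tr A = A 0 0 + A 1 1.
Proof.
rewrite /mxtrace big_ord_recl big_ord1.
have -> : lift ord0 (ord0 : 'I_1) = 1 :> 'I_2 by apply/val_inj.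
by [].
Qed.

Lemma rho_part (R : realFieldType) k (A B : 'M[R]_2) (p0 : nat) (i : 'I_k.+1) (y y' : R) :
 (p0.+1 <= k)%N -> p0 != i -> p0.+1 != i -> \tr A = 0 -> \tr B = 0 ->
 (forall r p : 'I_k.+1, r != i -> p != i ->
    rhoS k A r p + (r==p)%:R * y = rhoS k B r p + (r==p)%:R * y') -> A = B.
Proof.
move=> hk h0 h1; rewrite !tr2 => tA tB H.
have hv0 : (p0 < k.+1)%N by lia.
have hv1 : (p0.+1 < k.+1)%N by lia.
pose a := Ordinal hv0; pose b := Ordinal hv1.
have ha : a != i by rewrite -val_eqE.
have hb : b != i by rewrite -val_eqE.
have hab : (a == b) = false by apply/negbTE; rewrite -val_eqE /=; lia.
have hba : (b == a) = false by rewrite eq_sym.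
have e1 := H b a hb ha. have e2 := H a b ha hb.
have e3 := H a a ha ha. have e4 := H b b hb hb.
move: e1 e2 e3 e4; have n1 : forall n, (n.+1 == n) = false by move=> n; apply/negbTE; lia.
have n2 : forall n, (n == n.+1) = false by move=> n; apply/negbTE; lia.
have n3 : forall n, (n.+2 == n) = false by move=> n; apply/negbTE; lia.
have n4 : forall n, (n == n.+2) = false by move=> n; apply/negbTE; lia.
rewrite !mxE !eqxx hab hba /= !eqSS !n1 !n2 !n3 !n4 !mul0r !mul1r !add0r !addr0.
have ek : (k - p0)%N = (k - p0.+1).+1 by lia.
rewrite ek; move: (k - p0.+1)%N => t.
move=> e1 e2 e3 e4.
have hA10 : A 1 0 = B 1 0.
  by apply: (mulfI _ e1); rewrite pnatr_eq0.
have hA01 : A 0 1 = B 0 1.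
  by apply: (mulfI _ e2); rewrite pnatr_eq0.
have d : A 0 0 - A 1 1 = B 0 0 - B 1 1.
  have e5 := congr2 (fun u v => u - v) e3 e4.
  have L1 : A 0 0 - A 1 1 = ((t.+1%:R * A 0 0 + p0%:R * A 1 1 + y) - (t%:R * A 0 0 + p0.+1%:R * A 1 1 + y)).
    rewrite !mulrS; ring.
  have L2 : B 0 0 - B 1 1 = ((t.+1%:R * B 0 0 + p0%:R * B 1 1 + y') - (t%:R * B 0 0 + p0.+1%:R * B 1 1 + y')).
    rewrite !mulrS; ring.
  by rewrite L1 L2.
have hA00 : A 0 0 = B 0 0 by lra.
have hA11 : A 1 1 = B 1 1 by lra.
have ord2 : forall u : 'I_2, u = 0 \/ u = 1.
  by case=> [[|[|n]] hn]; [left; apply/val_inj|right; apply/val_inj|].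
apply/matrixP => u v.
by case: (ord2 u) => ->; case: (ord2 v) => ->.
Qed.

Theorem lemma3 (R : realFieldType) (k m : nat) :
  (2 <= m)%N -> (3 <= k)%N ->
  forall phi psi : Vsp R k m -> 'M[R]_2 * 'M[R]_m,
    hom_V_a phi -> hom_V_a psi ->
    (forall v1 v2, spencer1 phi v1 v2 = spencer1 psi v1 v2) ->
    forall v, phi v = psi v.
Proof.
move=> hm hk phi psi [Pa Pb Ptr] [Qa Qb Qtr] H.
have Hent : forall (i p r : 'I_k.+1) (j q s : 'I_m),
  -(rhoS k (phi (delta_mx p q)).1 r i * (s == j)%:R + (r == i)%:R * (phi (delta_mx p q)).2 s j)
  + (rhoS k (phi (delta_mx i j)).1 r p * (s == q)%:R + (r == p)%:R * (phi (delta_mx i j)).2 s q)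
  = -(rhoS k (psi (delta_mx p q)).1 r i * (s == j)%:R + (r == i)%:R * (psi (delta_mx p q)).2 s j)
  + (rhoS k (psi (delta_mx i j)).1 r p * (s == q)%:R + (r == p)%:R * (psi (delta_mx i j)).2 s q).
  move=> i p r j q s.
  have := congr1 (fun M : Vsp R k m => M r s) (H (delta_mx i j) (delta_mx p q)).
  by rewrite /spencer1 /= !oppadd_entry !act_delta.
have hm0 : (0 < m)%N by lia.
have hm1 : (1 < m)%N by lia.
have Xeq : forall i j, (phi (delta_mx i j)).1 = (psi (delta_mx i j)).1.
  move=> i j.
  have [q hq] : exists q : 'I_m, q != j.
    case: (eqVneq j (Ordinal hm0)) => hj.
      by exists (Ordinal hm1); rewrite hj -val_eqE.
    by exists (Ordinal hm0); rewrite eq_sym.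
  pose p0 := if (i <= 1)%N then 2%N else 0%N.
  apply: (@rho_part R k _ _ p0 i ((phi (delta_mx i j)).2 q q) ((psi (delta_mx i j)).2 q q)).
  - by rewrite /p0; case: ifP => h; lia.
  - by rewrite /p0; case: ifP => h; lia.
  - by rewrite /p0; case: ifP => h; lia.
  - exact: Ptr.
  - exact: Qtr.
  move=> r p hr hp; have := Hent i p r j q q.
  rewrite (negbTE hr) eqxx (negbTE hq) !mulr0 !mul0r !add0r !oppr0 !mulr1 !add0r.
  by [].
have Yeq : forall i j, (phi (delta_mx i j)).2 = (psi (delta_mx i j)).2.
  move=> i j; apply/matrixP => s q.
  have hk0 : (0 < k.+1)%N by lia.
  have hk1 : (1 < k.+1)%N by lia.
  have [p hp] : exists p : 'I_k.+1, p != i.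
    case: (eqVneq i (Ordinal hk0)) => hi.
      by exists (Ordinal hk1); rewrite hi -val_eqE.
    by exists (Ordinal hk0); rewrite eq_sym.
  have := Hent i p p j q s.
  rewrite !Xeq (negbTE hp) eqxx !mul0r !addr0 !mul1r.
  by move/addrI/addrI.
move=> v.
have h1 : (phi v).1 = (psi v).1.
  rewrite (@lin_sum _ _ _ _ (fun v => (phi v).1) Pa v) (@lin_sum _ _ _ _ (fun v => (psi v).1) Qa v).
  by apply: eq_bigr => i _; apply: eq_bigr => j _; rewrite Xeq.
have h2 : (phi v).2 = (psi v).2.
  rewrite (@lin_sum _ _ _ _ (fun v => (phi v).2) Pb v) (@lin_sum _ _ _ _ (fun v => (psi v).2) Qb v).
  by apply: eq_bigr => i _; apply: eq_bigr => j _; rewrite Yeq.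
by move: h1 h2; case: (phi v) => ? ?; case: (psi v) => ? ? /= -> ->.
Qed.
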